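(* Let $p,q\ge1$, $N>\max(p,q)$, let $\mu$ be a $q\times p$ matrix of measures, and assume $\mathscr M_N$ admits a Gauss--Borel factorization $\mathscr M_N=\mathscr L_N^{-1}\mathscr U_N^{-1}$ (with $\mathscr L_n,\mathscr U_n$, $n\le N$, the leading principal submatrices). Define \[\mathscr T_N:=\mathscr L_N\Lambda^{[N,N+q]}_{[q]}\mathscr M^{[N+q,N]}\mathscr U_N,\quad \mathscr T^{[N-q,N]}:=\mathscr L_{N-q}\Lambda^{[N-q,N]}_{[q]}\mathscr L_N^{-1},\quad \mathscr T^{[N,N-p]}:=\mathscr U_N^{-1}\big(\Lambda^{[N-p,N]}_{[p]}\big)^\top\mathscr U_{N-p}.\] Then $\mathscr T_N\in\mathbb R^{N\times N}$, $\mathscr T^{[N-q,N]}\in\mathbb R^{(N-q)\times N}$ and $\mathscr T^{[N,N-p]}\in\mathbb R^{N\times(N-p)}$ are banded matrices with $q$ superdiagonals and $p$ subdiagonals, i.e. their $(i,j)$ entries vanish unless $-p\le j-i\le q$.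
   Context: All matrices are indexed from $0$. $\mu$ is a $q\times p$ matrix of real measures with finite moments. For $r,n\ge1$, $X^{[n]}_{[r]}(x)$ is the $n\times r$ matrix whose row $k$ is $x^{\lfloor k/r\rfloor}e_{k\bmod r}^\top$ ($e_0,\dots,e_{r-1}$ standard basis of $\mathbb R^r$). Moment matrices: $\mathscr M^{[n,m]}=\int X^{[n]}_{[q]}\,\mathrm d\mu\,(X^{[m]}_{[p]})^\top$, $\mathscr M_n=\mathscr M^{[n,n]}$. Gauss--Borel factorization: $\mathscr M_N=\mathscr L_N^{-1}\mathscr U_N^{-1}$, $\mathscr L_N$ nonsingular lower triangular, $\mathscr U_N$ nonsingular upper triangular. For $r,n\ge1$, $\Lambda^{[n,n+r]}_{[r]}$ is the $n\times(n+r)$ matrix with entries $\delta_{j,i+r}$. *)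

(* Defs.v *)
From HB Require Import structures.
From mathcomp Require Import all_boot all_order all_algebra.
From mathcomp Require Import all_classical all_reals all_analysis.
Set Implicit Arguments. Unset Strict Implicit. Unset Printing Implicit Defensive.
Import Order.TTheory GRing.Theory Num.Theory.
Local Open Scope ring_scope.

(* A real (signed) measure on R, given by its Jordan-type decomposition
   mu = muP - muN into two (positive) measures on the Borel sets of R. *)
Definition signed_int (R : realType)
  (muP muN : {measure set R -> \bar R}) (f : R -> R) : R :=
  Rintegral muP setT f - Rintegral muN setT f.

Definition finite_moments (R : realType) (mu : {measure set R -> \bar R}) :=
  forall j : nat, mu.-integrable setT (fun x : R => (x ^+ j)%:E).

Definition Xmat (R : realType) (r n : nat) (x : R) : 'M[R]_(n, r) :=
  \matrix_(k < n, a < r) (if (k %% r)%N == (a : nat) then x ^+ (k %/ r) else 0).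

(* M^{[n,m]} = \int X^{[n]}_{[q]} dmu (X^{[m]}_{[p]})^T, entrywise *)
Definition moment_mx (R : realType) (q p : nat)
  (muP muN : 'I_q -> 'I_p -> {measure set R -> \bar R}) (n m : nat)
  : 'M[R]_(n, m) :=
  \matrix_(k < n, l < m)
    \sum_(a < q) \sum_(b < p)
      signed_int (muP a b) (muN a b)
        (fun x => Xmat q n x k a * Xmat p m x l b).

Definition Lambda (R : ringType) (r n m : nat) : 'M[R]_(n, m) :=
  \matrix_(i < n, j < m) (((j : nat) == i + r)%N)%:R.

Definition mxnat (R : ringType) (m n : nat) (A : 'M[R]_(m, n)) (i j : nat) : R :=
  match @insub _ (fun k => (k < m)%N) 'I_m i, @insub _ (fun k => (k < n)%N) 'I_n j with
  | Some i', Some j' => A i' j'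
  | _, _ => 0
  end.

Definition lead (R : ringType) (N : nat) (n : nat) (A : 'M[R]_N) : 'M[R]_n :=
  \matrix_(i < n, j < n) mxnat A i j.

Definition lower_tri (R : ringType) (n : nat) (A : 'M[R]_n) :=
  forall i j : 'I_n, (i < j)%N -> A i j = 0.
Definition upper_tri (R : ringType) (n : nat) (A : 'M[R]_n) :=
  forall i j : 'I_n, (j < i)%N -> A i j = 0.

Definition banded (R : ringType) (p q m n : nat) (A : 'M[R]_(m, n)) :=
  forall (i : 'I_m) (j : 'I_n),
    ~~ ((i <= j + p)%N && (j <= i + q)%N) -> A i j = 0.
Arguments Lambda {R} r n m.

(* Main.v *)
Require Import Defs.
From HB Require Import structures.
From mathcomp Require Import all_boot all_order all_algebra.
From mathcomp Require Import all_classical all_reals all_analysis.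
Import Order.TTheory GRing.Theory Num.Theory.
Local Open Scope ring_scope.

Section Gen.
Variable F : fieldType.

Lemma lower_inv n (A : 'M[F]_n) : lower_tri A -> A \in unitmx -> lower_tri (invmx A).
Proof.
move=> hA hu.
have AB : A *m invmx A = 1%:M := mulmxV hu.
have hd : \det A != 0 by rewrite -unitfE -unitmxE.
have hdiag : forall i, A i i != 0.
  move=> i; move: hd; rewrite det_trig; last by apply/is_trig_mxP.
  by rewrite (bigD1 i) //= mulf_eq0 negb_or => /andP[].
suff H : forall m (i j : 'I_n), (i <= m)%N -> (i < j)%N -> invmx A i j = 0.
  by move=> i j; apply: (H i).
elim=> [|m IH] i j him hij.
- have := congr1 (fun M : 'M[F]_n => M i j) AB; rewrite /= !mxE (bigD1 i) //= big1.
    have hne : (i == j) = false by apply/eqP => e; move: hij; rewrite e ltnn.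
    rewrite addr0 hne mulr0n => /eqP; rewrite mulf_eq0 (negbTE (hdiag i)) /=.
    by move/eqP.
  move=> k hk; case: (ltngtP i k) => h.
  + by rewrite hA // mul0r.
  + by have := leq_trans h him.
  + by move: hk; rewrite -(inj_eq val_inj) /= h eqxx.
- have := congr1 (fun M : 'M[F]_n => M i j) AB; rewrite /= !mxE (bigD1 i) //= big1.
    have hne : (i == j) = false by apply/eqP => e; move: hij; rewrite e ltnn.
    rewrite addr0 hne mulr0n => /eqP; rewrite mulf_eq0 (negbTE (hdiag i)) /=.
    by move/eqP.
  move=> k hk; case: (ltngtP i k) => h.
  + by rewrite hA // mul0r.
  + rewrite (IH k j) ?mulr0 //; first by rewrite -ltnS (leq_trans h).
    exact: ltn_trans hij.
  + by move: hk; rewrite -(inj_eq val_inj) /= h eqxx.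
Qed.

Lemma upper_inv n (A : 'M[F]_n) : upper_tri A -> A \in unitmx -> upper_tri (invmx A).
Proof.
move=> hA hu i j hij.
have hT : lower_tri A^T by move=> a b h; rewrite mxE hA.
have huT : A^T \in unitmx by rewrite unitmx_tr.
have := @lower_inv _ A^T hT huT j i hij.
by rewrite -trmx_inv mxE.
Qed.

Lemma Lambda_mull r n m n' (B : 'M[F]_(m, n')) (i : 'I_n) j (h : (i + r < m)%N) :
  (Lambda r n m *m B) i j = B (Ordinal h) j.
Proof.
rewrite mxE (bigD1 (Ordinal h)) //= mxE eqxx mul1r big1 ?addr0 // => k hk.
rewrite mxE; case: eqP => [e|]; last by rewrite mul0r.
by move: hk; rewrite -(inj_eq val_inj) /= e eqxx.
Qed.

Lemma Lambda_mulrT r n m n' (A : 'M[F]_(n', m)) i (j : 'I_n) (h : (j + r < m)%N) :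
  (A *m (Lambda r n m)^T) i j = A i (Ordinal h).
Proof.
rewrite mxE (bigD1 (Ordinal h)) //= !mxE eqxx mulr1 big1 ?addr0 // => k hk.
rewrite !mxE; case: eqP => [e|]; last by rewrite mulr0.
by move: hk; rewrite -(inj_eq val_inj) /= e eqxx.
Qed.

Lemma leadE N n (A : 'M[F]_N) (h : (n <= N)%N) i j :
  lead n A i j = A (widen_ord h i) (widen_ord h j).
Proof.
rewrite mxE /mxnat.
have hi : (i < N)%N by apply: leq_trans h.
have hj : (j < N)%N by apply: leq_trans h.
rewrite (insubT (fun k => (k < N)%N) hi) (insubT (fun k => (k < N)%N) hj).
by congr (A _ _); apply: val_inj.
Qed.

Lemma sum_widen n m (h : (n <= m)%N) (G : 'I_m -> F) :
  (forall k : 'I_m, (n <= k)%N -> G k = 0) ->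
  \sum_(k < n) G (widen_ord h k) = \sum_(k < m) G k.
Proof.
move=> hG; rewrite [RHS](bigID (fun k : 'I_m => (k < n)%N)) /=.
rewrite [X in _ + X]big1 ?addr0; last by move=> k; rewrite -leqNgt; apply: hG.
by rewrite (big_ord_narrow h).
Qed.
End Gen.

From mathcomp Require Import zify.

Section Mom.
Variables (R : realType) (q p : nat).
Variables (muP muN : 'I_q -> 'I_p -> {measure set R -> \bar R}).

Definition E (k l : nat) : R :=
  \sum_(a < q) \sum_(b < p) signed_int (muP a b) (muN a b)
    (fun x => (if (k %% q)%N == (a : nat) then x ^+ (k %/ q) else 0) *
              (if (l %% p)%N == (b : nat) then x ^+ (l %/ p) else 0)).

Lemma momE n m (i : 'I_n) (j : 'I_m) : moment_mx muP muN n m i j = E i j.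
Proof.
rewrite mxE; apply: eq_bigr => a _; apply: eq_bigr => b _.
by congr signed_int; apply: boolp.funext => x; rewrite !mxE.
Qed.

Lemma Eshift (hq : (0 < q)%N) (hp : (0 < p)%N) k l : E (k + q) l = E k (l + p).
Proof.
have dq : ((k + q) %/ q = (k %/ q).+1)%N.
  by rewrite -[X in (k + X)%N]mul1n addnC divnMDl // add1n.
have dp : ((l + p) %/ p = (l %/ p).+1)%N.
  by rewrite -[X in (l + X)%N]mul1n addnC divnMDl // add1n.
rewrite /E; apply: eq_bigr => a _; apply: eq_bigr => b _.
congr signed_int; apply: boolp.funext => x.
rewrite !modnDr dq dp.
case: (_ == _); case: (_ == _); rewrite ?mulr0 ?mul0r //.
by rewrite -!exprD addSn addnS.
Qed.
End Mom.

Theorem mainTheorem6 (R : realType) (p q N : nat)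
  (hp : (1 <= p)%N) (hq : (1 <= q)%N) (hN : (maxn p q < N)%N)
  (muP muN : 'I_q -> 'I_p -> {measure set R -> \bar R})
  (hmuP : forall a b, finite_moments (muP a b))
  (hmuN : forall a b, finite_moments (muN a b))
  (L U : 'M[R]_N)
  (hLt : lower_tri L) (hLu : L \in unitmx)
  (hUt : upper_tri U) (hUu : U \in unitmx)
  (hGB : moment_mx muP muN N N = invmx L *m invmx U) :
  banded p q (L *m Lambda q N (N + q) *m moment_mx muP muN (N + q) N *m U)
  /\ banded p q (lead (N - q) L *m Lambda q (N - q) N *m invmx L)
  /\ banded p q (invmx U *m (Lambda p (N - p) N)^T *m lead (N - p) U).
Proof.
set M := moment_mx muP muN N N.
have hLM : L *m M = invmx U by rewrite /M hGB mulmxA mulmxV // mul1mx.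
have hMU : M *m U = invmx L by rewrite /M hGB -mulmxA mulVmx // mulmx1.
have hLi := @lower_inv _ _ L hLt hLu.
have hUi := @upper_inv _ _ U hUt hUu.
have hpN : (p < N)%N by move: hN; rewrite gtn_max => /andP[].
have hqN : (q < N)%N by move: hN; rewrite gtn_max => /andP[].
split; [|split].
- move=> i j; rewrite negb_and -!ltnNge => /orP [hi | hj].
  + set C := Lambda q N (N + q) *m moment_mx muP muN (N + q) N.
    have hC2 : forall (k l : 'I_N) (h : (l + p < N)%N), C k l = M k (Ordinal h).
      move=> k l h; have hk : (k + q < N + q)%N by rewrite ltn_add2r.
      by rewrite /C (@Lambda_mull _ _ _ _ _ _ _ _ hk) /M !momE /= (Eshift _ _ _ _ _ hq hp).
    rewrite -(mulmxA L) mxE big1 // => l _.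
    case: (leqP l j) => hl; last by rewrite hUt // mulr0.
    have hlp : (l + p < N)%N by have := ltn_ord i; lia.
    have -> : (L *m C) i l = (L *m M) i (Ordinal hlp).
      by rewrite !mxE; apply: eq_bigr => k _; rewrite (hC2 _ _ hlp).
    by rewrite hLM hUi ?mul0r //=; lia.
  + set C := Lambda q N (N + q) *m moment_mx muP muN (N + q) N.
    have hC1 : forall (k l : 'I_N) (h : (k + q < N)%N), C k l = M (Ordinal h) l.
      move=> k l h; have hk : (k + q < N + q)%N by rewrite ltn_add2r.
      by rewrite /C (@Lambda_mull _ _ _ _ _ _ _ _ hk) /M !momE.
    rewrite -(mulmxA L) -mulmxA mxE big1 // => k _.
    case: (leqP k i) => hk; last by rewrite hLt // mul0r.
    have hkq : (k + q < N)%N by have := ltn_ord j; lia.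
    have -> : (C *m U) k j = (M *m U) (Ordinal hkq) j.
      by rewrite !mxE; apply: eq_bigr => l _; rewrite (hC1 _ _ hkq).
    by rewrite hMU hLi ?mulr0 //=; lia.
- have hNq : (N - q <= N)%N by apply: leq_subr.
  move=> i j; rewrite negb_and -!ltnNge => /orP [hi | hj].
  + rewrite -hMU mulmxA -(mulmxA (lead (N - q) L)) mxE big1 // => l _.
    case: (leqP l j) => hl; last by rewrite hUt // mulr0.
    have hlp : (l + p < N)%N by have := ltn_ord i; lia.
    have -> : (lead (N - q) L *m (Lambda q (N - q) N *m M)) i l
              = (L *m M) (widen_ord hNq i) (Ordinal hlp).
      rewrite mxE [RHS]mxE -(@sum_widen _ _ _ hNq); last first.
        by move=> k hk; rewrite hLt ?mul0r //=; have := ltn_ord i; lia.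
      apply: eq_bigr => k _.
      have hkq : (k + q < N)%N by have := ltn_ord k; lia.
      rewrite (@leadE _ _ _ _ hNq) (@Lambda_mull _ _ _ _ _ _ _ _ hkq) /M !momE /=.
      by rewrite (Eshift _ _ _ _ _ hq hp).
    by rewrite hLM hUi ?mul0r //=; lia.
  + rewrite -mulmxA mxE big1 // => k _.
    rewrite (@leadE _ _ _ _ hNq).
    case: (leqP k i) => hk; last by rewrite hLt ?mul0r.
    have hkq : (k + q < N)%N by have := ltn_ord k; lia.
    by rewrite (@Lambda_mull _ _ _ _ _ _ _ _ hkq) hLi ?mulr0 //=; lia.
- have hNp : (N - p <= N)%N by apply: leq_subr.
  move=> i j; rewrite negb_and -!ltnNge => /orP [hi | hj].
  + rewrite mxE big1 // => l _.
    rewrite (@leadE _ _ _ _ hNp).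
    case: (leqP l j) => hl; last by rewrite hUt ?mulr0.
    have hlp : (l + p < N)%N by have := ltn_ord l; lia.
    by rewrite (@Lambda_mulrT _ _ _ _ _ _ _ _ hlp) hUi ?mul0r //=; lia.
  + rewrite -hLM -!mulmxA mxE big1 // => k _.
    case: (leqP k i) => hk; last by rewrite hLt // mul0r.
    have hkq : (k + q < N)%N by have := ltn_ord j; lia.
    rewrite mulmxA.
    have -> : ((M *m (Lambda p (N - p) N)^T) *m lead (N - p) U) k j
              = (M *m U) (Ordinal hkq) (widen_ord hNp j).
      rewrite mxE [RHS]mxE -(@sum_widen _ _ _ hNp); last first.
        by move=> l hl; rewrite hUt ?mulr0 //=; have := ltn_ord j; lia.
      apply: eq_bigr => l _.
      have hlp : (l + p < N)%N by have := ltn_ord l; lia.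
      rewrite (@leadE _ _ _ _ hNp) (@Lambda_mulrT _ _ _ _ _ _ _ _ hlp) /M !momE /=.
      by rewrite (Eshift _ _ _ _ _ hq hp).
    by rewrite hMU hLi ?mulr0 //=; have := ltn_ord j; lia.
Qed.
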